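(* Let $R=(S^0,\dots,S^T)$ be any $T$-covering in a symmetric congestion game in which every delay function is $f(x)=x$. Then $C(S^T)\le 2\Gamma(R)$.
   Context: A congestion game has players $N=\{1,\dots,n\}$, a finite resource set $E$ and strategy sets $\Sigma_i\subseteq 2^E$; it is symmetric if all $\Sigma_i$ equal a common set $\Sigma$. For a profile $S=(s_1,\dots,s_n)$, $n_e(S)=|\{i:e\in s_i\}|$. Here all delays are $f(x)=x$, so $c_i(S)=\sum_{e\in s_i}n_e(S)$ and $C(S)=\sum_i c_i(S)=\sum_{e\in E}n_e(S)^2$. Fix an optimal profile $S^*$ minimizing $C$. A best response of player $i$ in $S$ is a strategy $s_i^b\in\Sigma_i$ minimizing $c_i(S_{-i},\cdot)$ (where $(S_{-i},s_i')$ replaces $s_i$ by $s_i'$); if no strategy strictly decreases $i$'s cost, the best response is $s_i$ itself. A $T$-covering is a sequence of profiles $R=(S^0,\dots,S^T)$ with players $\pi(1),\dots,\pi(T)$ such that for each $1\le t\le T$, $S^t=(S^{t-1}_{-\pi(t)},s')$ with $s'$ a best response of $\pi(t)$ in $S^{t-1}$, and every player occurs at least once among $\pi(1),\dots,\pi(T)$. For each player $i$, $\mathrm{last}(i)=\max\{t:\pi(t)=i\}$. Define $\Gamma(R)=\frac1n\sum_{i=1}^n\sum_{e\in E}n_e(S^* )\bigl(n_e(S^{\mathrm{last}(i)-1})+1\bigr)$. *)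

(* Defs.v *)
From HB Require Import structures.
From mathcomp Require Import all_boot all_order all_algebra.
Set Implicit Arguments. Unset Strict Implicit. Unset Printing Implicit Defensive.

(* Players are 'I_n, resources a finType E, a profile assigns to each player
   a subset of E (its strategy). Delays are f(x) = x. *)
Definition profile (n : nat) (E : finType) := {ffun 'I_n -> {set E}}.

Definition valid (n : nat) (E : finType) (Sigma : {set {set E}}) (S : profile n E) :=
  forall i, S i \in Sigma.

Definition load (n : nat) (E : finType) (S : profile n E) (e : E) : nat :=
  #|[set i | e \in S i]|.

Definition pcost (n : nat) (E : finType) (S : profile n E) (i : 'I_n) : nat :=
  \sum_(e in S i) load S e.

Definition social (n : nat) (E : finType) (S : profile n E) : nat :=
  \sum_(e : E) (load S e) ^ 2.

Definition upd (n : nat) (E : finType) (S : profile n E) (i : 'I_n) (s : {set E})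
  : profile n E := [ffun j => if j == i then s else S j].

Definition optimal (n : nat) (E : finType) (Sigma : {set {set E}}) (S : profile n E) :=
  valid Sigma S /\ forall S' : profile n E, valid Sigma S' -> social S <= social S'.

Definition best_response (n : nat) (E : finType) (Sigma : {set {set E}})
  (S : profile n E) (i : 'I_n) (s' : {set E}) :=
  [/\ s' \in Sigma,
      (forall s'', s'' \in Sigma -> pcost (upd S i s') i <= pcost (upd S i s'') i) &
      ((forall s'', s'' \in Sigma -> pcost S i <= pcost (upd S i s'') i) -> s' = S i)].

Definition covering (n : nat) (E : finType) (Sigma : {set {set E}})
  (T : nat) (S : nat -> profile n E) (pi : nat -> 'I_n) :=
  [/\ valid Sigma (S 0),
      (forall t, 1 <= t <= T ->
         exists2 s', best_response Sigma (S t.-1) (pi t) s' &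
                     S t = upd (S t.-1) (pi t) s') &
      (forall i : 'I_n, exists2 t, 1 <= t <= T & pi t = i)].

Definition lastt (n : nat) (T : nat) (pi : nat -> 'I_n) (i : 'I_n) : nat :=
  \max_(t < T.+1 | (0 < t) && (pi t == i)) (t : nat).

Definition Gamma (n : nat) (E : finType) (Sstar : profile n E)
  (T : nat) (S : nat -> profile n E) (pi : nat -> 'I_n) : rat :=
  (n%:R)^-1 * (\sum_(i < n) \sum_(e : E)
     (load Sstar e * (load (S (lastt T pi i).-1) e + 1))%N%:R)%R.

(* Main.v *)
Require Import Defs.
From HB Require Import structures.
From mathcomp Require Import all_boot all_order all_algebra.
Import Order.TTheory GRing.Theory Num.Theory.

Lemma card_sum (I : finType) (P : pred I) : #|[set i | P i]| = \sum_i (P i : nat).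
Proof.
rewrite -sum1_card big_mkcond; apply eq_bigr => i _; rewrite inE; by case: (P i).
Qed.

Lemma load_upd n (E : finType) (S : profile n E) i s e :
  load (upd S i s) e <= load S e + 1.
Proof.
rewrite /load.
apply: leq_trans (_ : #|i |: [set j | e \in S j]| <= _).
  apply: subset_leq_card; apply/subsetP => j; rewrite !inE ffunE.
  by case: eqP => [->|_]; rewrite ?eqxx //=.
by rewrite cardsU1 addnC leq_add2l leq_b1.
Qed.

Lemma br_bound n (E : finType) (Sigma : {set {set E}}) (S0 : profile n E) i s' s'' :
  best_response Sigma S0 i s' -> s'' \in Sigma ->
  pcost (upd S0 i s') i <= \sum_(e in s'') (load S0 e + 1).
Proof.
case=> _ H _ Hs''; apply: leq_trans (H _ Hs'') _.
rewrite /pcost ffunE eqxx; apply: leq_sum => e _; exact: load_upd.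
Qed.
Arguments br_bound {n E Sigma S0 i s' s''}.

Lemma sum_exch n (E : finType) (Sstar : profile n E) (f : E -> nat) :
  \sum_(j < n) \sum_(e in Sstar j) f e = \sum_e load Sstar e * f e.
Proof.
rewrite (eq_bigr (fun j => \sum_e (if e \in Sstar j then f e else 0))); last first.
  by move=> j _; rewrite big_mkcond.
rewrite exchange_big /=; apply eq_bigr => e _.
rewrite /load (@card_sum _ (fun j => e \in Sstar j)) big_distrl /=.
apply eq_bigr => j _; by case: (e \in Sstar j); rewrite ?mul1n ?mul0n.
Qed.

Lemma lastt_spec n T (pi : nat -> 'I_n) i :
  (exists2 t, 1 <= t <= T & pi t = i) ->
  [/\ 0 < lastt T pi i <= T, pi (lastt T pi i) = i &
      forall t, lastt T pi i < t <= T -> pi t != i].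
Proof.
move=> [t /andP[t1 tT] pit]; rewrite /lastt.
have Hup : forall k : 'I_T.+1, 0 < k -> pi k == i ->
    (k : nat) <= \max_(k < T.+1 | (0 < k) && (pi k == i)) (k : nat).
  by move=> k k1 kp; apply: leq_bigmax_cond; rewrite k1 kp.
have Hc : 0 < #|(fun k : 'I_T.+1 => (0 < k) && (pi k == i))|.
  apply/card_gt0P; exists (Ordinal (tT : t < T.+1)).
  by rewrite unfold_in /= t1 pit eqxx.
have [k0 Hk0 Heq] := eq_bigmax_cond (fun k : 'I_T.+1 => (k : nat)) Hc.
have -> : \max_(k < T.+1 | (0 < k) && (pi k == i)) (k : nat) = k0 by [].
move: Hk0; rewrite unfold_in => /andP[k01 /eqP k0p].
split => //; first by rewrite k01 -ltnS ltn_ord.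
move=> t' /andP[lt tl]; apply/negP => /eqP pt.
have := Hup (Ordinal (tl : t' < T.+1)) (leq_ltn_trans (leq0n _) lt).
rewrite /= pt eqxx => /(_ erefl) H.
have : t' <= k0 by apply: leq_trans H _; rewrite -Heq.
by rewrite leqNgt lt.
Qed.
Arguments lastt_spec {n T pi i}.

Lemma stable n (E : finType) (Sigma : {set {set E}}) T (S : nat -> profile n E) pi :
  covering Sigma T S pi -> forall i t, lastt T pi i <= t <= T ->
  S t i = S (lastt T pi i) i.
Proof.
move=> [_ Hstep Hcov] i t /andP[Lt tT].
have [_ _ Hnot] := lastt_spec (Hcov i).
move: tT; rewrite -(subnKC Lt).
elim: (t - lastt T pi i) => [|k IH] Hk; first by rewrite addn0.
have Hk' : 1 <= lastt T pi i + k.+1 <= T by rewrite Hk andbT addnS.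
have [s' _ ->] := Hstep _ Hk'.
rewrite ffunE addnS /= eq_sym (negbTE (Hnot _ _)); last by rewrite -addnS Hk andbT -{1}[lastt T pi i]addn0 ltn_add2l.
by apply: IH; apply: ltnW; rewrite -addnS.
Qed.
Arguments stable {n E Sigma T S pi}.

Theorem lemma5 (n : nat) (E : finType) (Sigma : {set {set E}})
  (Sstar : profile n E) (T : nat) (S : nat -> profile n E) (pi : nat -> 'I_n) :
  optimal Sigma Sstar ->
  covering Sigma T S pi ->
  ((social (S T))%:R <= 2 * Gamma Sstar T S pi :> rat)%R.
Proof.
move=> [Hval _] Hcovg; have [H0 Hstep Hcov] := Hcovg.
pose L := lastt T pi.
have Lspec i := lastt_spec (Hcov i).
have Hst : forall i t, L i <= t <= T -> S t i = S (L i) i.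
  exact: stable Hcovg.
have HST : forall i j, L j <= L i -> S (L i) j = S T j.
  move=> i j h; have [/andP[_ LiT] _ _] := Lspec i.
  by rewrite (Hst j (L i)) ?h ?LiT // (Hst j T) ?leqnn ?andbT // (leq_trans h).
pose Y := \sum_i pcost (S (L i)) i.
pose X := \sum_(i<n) \sum_e (load Sstar e * (load (S (L i).-1) e + 1)).
have HXY : n * Y <= X.
  rewrite /Y big_distrr /=; apply: leq_sum => i _.
  have [/andP[L1 LT] Lpi _] := Lspec i.
  have [s' Hbr Heq] := Hstep (L i) (introT andP (conj L1 LT)).
  rewrite Lpi in Hbr Heq; rewrite Heq -sum_exch.
  apply: leq_trans (_ : \sum_(j < n) pcost (upd (S (L i).-1) i s') i <= _).
    by rewrite sum_nat_const card_ord.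
  by apply: leq_sum => j _; apply: br_bound Hbr (Hval j).
pose M e i j := ((e \in S T i) * (e \in S T j) * (L j <= L i))%N.
have HY : \sum_e \sum_i \sum_j M e i j <= Y.
  rewrite exchange_big /=; apply: leq_sum => i _.
  have [/andP[_ LT] _ _] := Lspec i.
  rewrite /pcost -(Hst i T) ?leqnn ?LT // [leqRHS]big_mkcond /=.
  apply: leq_sum => e _; rewrite /M.
  case: (e \in S T i) => /=; last by rewrite big1 // => j _; rewrite !mul0n.
  rewrite /load (@card_sum _ (fun j => e \in S (L i) j)).
  apply: leq_sum => j _; rewrite mul1n.
  case: (leqP (L j) (L i)) => h; last by rewrite muln0.
  by rewrite muln1 HST.
have key : forall e, load (S T) e ^ 2 <= 2 * \sum_i \sum_j M e i j.
  move=> e; apply: leq_trans (_ : \sum_i \sum_j (M e i j + M e j i) <= _).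
    rewrite /load (@card_sum _ (fun j => e \in S T j)) expnS expn1 big_distrl /=.
    apply: leq_sum => i _; rewrite big_distrr /=; apply: leq_sum => j _.
    rewrite /M; case/orP: (leq_total (L j) (L i)) => h; rewrite h muln1.
      exact: leq_addr.
    by rewrite [X in _ <= _ + X]mulnC leq_addl.
  have -> : \sum_i \sum_j (M e i j + M e j i) =
            \sum_i \sum_j M e i j + \sum_i \sum_j M e j i.
    by rewrite -big_split; apply: eq_bigr => i _; rewrite big_split.
  by rewrite [X in _ + X <= _]exchange_big /= mul2n -addnn.
have HsY : social (S T) <= 2 * Y.
  apply: leq_trans (_ : \sum_e 2 * \sum_i \sum_j M e i j <= _).
    by apply: leq_sum => e _; apply: key.
  by rewrite -big_distrr /= leq_mul2l HY orbT.
have -> : Gamma Sstar T S pi = (n%:R^-1 * X%:R)%R.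
  by rewrite /Gamma /X natr_sum; congr (_ * _)%R; apply: eq_bigr => i _; rewrite natr_sum.
case: (posnP n) => [n0|npos].
  have Y0 : Y = 0%N by rewrite /Y big1 // => -[m hm]; exfalso; move: hm; rewrite n0.
  move: HsY; rewrite Y0 muln0 leqn0 => /eqP ->.
  by rewrite mulr_ge0 // mulr_ge0 // invr_ge0 ler0n.
apply: le_trans (_ : ((2 * Y)%N%:R <= _))%R; first by rewrite ler_nat.
rewrite natrM ler_wpM2l //.
rewrite -(ler_pM2l (x := n%:R)) ?ltr0n // mulrA mulfV ?pnatr_eq0 -?lt0n // mul1r.
by rewrite -natrM ler_nat.
Qed.
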